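(* Let $A$ be a commutative algebra over a field with multiplication $\star$ satisfying the Tortken identity $$(a\star b)\star(c\star d)-(a\star d)\star(c\star b)=(a,b,c)\star d-(a,d,c)\star b\quad\text{for all }a,b,c,d\in A.$$ For $a\in A$ let $r_a:A\to A$, $b\mapsto a\star b$. Then for all $a_1,a_2,a_3\in A$, $$\sum_{\sigma\in Sym_3}\operatorname{sign}(\sigma)\, r_{a_{\sigma(1)}}r_{a_{\sigma(2)}}r_{a_{\sigma(3)}}=0.$$
   Context: The associator is $(a,b,c)=a\star(b\star c)-(a\star b)\star c$. $Sym_3$ is the symmetric group on $\{1,2,3\}$. *)

(* Defs.v *)
(* A (possibly non-associative) commutative algebra over a
   field K is modelled as a K-vector space V (lmodType K) with a bilinear
   multiplication [mul]. *)
From HB Require Import structures.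
From mathcomp Require Import all_boot all_order all_algebra all_fingroup.
Set Implicit Arguments. Unset Strict Implicit. Unset Printing Implicit Defensive.
Import GRing.Theory.
Local Open Scope ring_scope.

Definition assoc {V : zmodType} (mul : V -> V -> V) (a b c : V) : V :=
  mul a (mul b c) - mul (mul a b) c.

Definition rmul {V : Type} (mul : V -> V -> V) (a : V) : V -> V := fun b => mul a b.

(* Main.v *)
Require Import Defs.
From HB Require Import structures.
From mathcomp Require Import all_boot all_order all_algebra all_fingroup.
Import GRing.Theory.
Local Open Scope ring_scope.
Definition p1 : 'S_3 := 1.
Definition p2 : 'S_3 := tperm 1 2.
Definition p3 : 'S_3 := tperm 0 1.
Definition p4 : 'S_3 := tperm 1 2 * tperm 0 1.
Definition p5 : 'S_3 := tperm 0 1 * tperm 1 2.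
Definition p6 : 'S_3 := tperm 0 2.
Definition g (s : 'S_3) := (s 0, s 1, s 2, odd_perm s).
Lemma gl : map g [:: p1; p2; p3; p4; p5; p6] =
  [:: (0,1,2,false); (0,2,1,true); (1,0,2,true); (1,2,0,false); (2,0,1,false); (2,1,0,true)].
Proof.
rewrite /= /g /p1 /p2 /p3 /p4 /p5 /p6 !odd_permM !odd_tperm odd_perm1 !permM !perm1 !permE /=.
done.
Qed.
Lemma uniql : uniq [:: p1; p2; p3; p4; p5; p6].
Proof. apply: (@map_uniq _ _ g). by rewrite gl. Qed.
Lemma alll (s : 'S_3) : s \in [:: p1; p2; p3; p4; p5; p6].
Proof.
have := uniql => /card_uniqP Hc.
have : #|[:: p1; p2; p3; p4; p5; p6]| = #|'S_3| by rewrite Hc card_Sn.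
move=> /subset_cardP H. by rewrite (H (subset_predT _)).
Qed.

Lemma h1 (V : zmodType) (a b c d : V) : (a + b) - (c + d) = (a - c) + (b - d).
Proof. by rewrite opprD addrACA. Qed.
Lemma h2 (V : zmodType) (a b c : V) : (a - b) - (c - b) = a - c.
Proof. by rewrite opprB addrA subrK. Qed.
Lemma h3 (V : zmodType) (a c : V) : (a - c) + (c - a) = 0.
Proof. by rewrite addrA subrK subrr. Qed.
Lemma gen (V : zmodType) (t1 t2 t3 t4 t5 t6 x1 x2 x3 y1 y2 y3 : V) :
  t1 - t2 = x1 - x2 + (y1 - y2) ->
  t3 - t4 = x3 - x2 + (y3 - y2) ->
  t5 - t6 = x3 - x1 + (y3 - y1) ->
  t1 + (- t2 + (- t3 + (t4 + (t5 + (- t6 + 0))))) = 0.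
Proof.
move=> H1 H2 H3.
have -> : t1 + (- t2 + (- t3 + (t4 + (t5 + (- t6 + 0))))) = (t1 - t2) - (t3 - t4) + (t5 - t6).
  by rewrite addr0 opprB !addrA (addrAC (t1 - t2) (-t3) t4).
by rewrite H1 H2 H3 h1 !h2 addrACA !h3 addr0.
Qed.

Theorem mainTheorem4 (K : fieldType) (V : lmodType K) (mul : V -> V -> V)
  (mulDr : forall a b c : V, mul a (b + c) = mul a b + mul a c)
  (mulZr : forall (k : K) (a b : V), mul a (k *: b) = k *: mul a b)
  (mulC : forall a b : V, mul a b = mul b a)
  (tortken : forall a b c d : V,
      mul (mul a b) (mul c d) - mul (mul a d) (mul c b)
      = mul (assoc mul a b c) d - mul (assoc mul a d c) b)
  (a : 'I_3 -> V) (x : V) :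
  \sum_(s : 'S_3) ((-1) ^+ odd_perm s : K) *:
      (rmul mul (a (s 0)) (rmul mul (a (s 1)) (rmul mul (a (s 2)) x))) = 0.
Proof.
have mulNr : forall u v, mul u (- v) = - mul u v.
  by move=> u v; rewrite -scaleN1r mulZr scaleN1r.
have mulBr : forall u v w, mul u (v - w) = mul u v - mul u w.
  by move=> u v w; rewrite mulDr mulNr.
have mulBl : forall u v w, mul (v - w) u = mul v u - mul w u.
  by move=> u v w; rewrite mulC mulBr (mulC u v) (mulC u w).
have key : forall b a c,
  mul b (mul a (mul c x)) - mul b (mul c (mul a x)) =
  mul (mul b c) (mul a x) - mul (mul a b) (mul c x)
  + (mul (mul a (mul b c)) x - mul (mul (mul a b) c) x).
  move=> b a0 c.
  have T := tortken a0 b c x.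
  rewrite /assoc !mulBl (mulC (mul a0 (mul x c)) b) (mulC (mul (mul a0 x) c) b) in T.
  rewrite (mulC x c) (mulC (mul a0 x) c) (mulC (mul a0 x) (mul c b)) (mulC c b) in T.
  set D := mul b (mul a0 (mul c x)) - mul b (mul c (mul a0 x)).
  set Y := mul (mul a0 (mul b c)) x - mul (mul (mul a0 b) c) x.
  set P := mul (mul a0 b) (mul c x).
  set Q := mul (mul b c) (mul a0 x).
  have -> : D = Y - (P - Q) by rewrite T opprB addrC subrK.
  by rewrite opprB addrC.
rewrite (eq_bigl (fun s => s \in [:: p1; p2; p3; p4; p5; p6])); last by move=> s; rewrite alll.
rewrite -big_uniq ?uniql //.
rewrite !big_cons big_nil.
rewrite /p1 /p2 /p3 /p4 /p5 /p6 !odd_permM !odd_tperm odd_perm1 !permM !perm1 !permE /=.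
rewrite /rmul expr0 expr1 !scale1r !scaleN1r.
have H1 := key (a 0) (a 1) (a 2).
have H2 := key (a 1) (a 0) (a 2).
have H3 := key (a 2) (a 0) (a 1).
rewrite (mulC (a 1) (a 0)) in H1.
rewrite (mulC (a 2) (a 1)) (mulC (mul (a 0) (a 2)) (a 1)) in H3.
exact: gen H1 H2 H3.
Qed.
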